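(* Let $d\ge1$ and $t\ge1$ be integers, $M\ge1$, $\rho>0$, and let $f:[0,1]^d\to\mathbb{R}$ be $\rho$-Lipschitz with respect to the $1$-norm. Let $a_1,\dots,a_{(t+1)^d-1}$ be the coefficients produced by the construction described in the context. Then $|a_i|\le 2^{d-1}d\rho$ for every $i$.
   Context: Let $\sigma(z)=\max(z,0)$ and $k=(t+1)^d$. For an integer $0\le i\le k-1$ let $\boldsymbol\pi^i$ be its base-$(t+1)$ digit vector ($0\le\pi^i_r\le t$, $i=\sum_{r=1}^d\pi^i_r(t+1)^{d-r}$). For parameters $a_j,b_{1,j},\dots,b_{d,j}$ define $\hat g_j(\mathbf{x})=a_j\,\sigma\big(\sum_{r=1}^d -M\sigma(-x_r+b_{r,j})+\tfrac1t\big)$. Construction: set $b=f(\mathbf{0})$; for $i=1,\dots,k-1$ in order: let $\hat y=b+\sum_{j=1}^{i-1}\hat g_j(\boldsymbol\pi^i/t)$, set $b_{r,i}=\pi^i_r/t$ for $r=1,\dots,d$, and set $a_i=t\big(f(\boldsymbol\pi^i/t)-\hat y\big)$. $f$ is $\rho$-Lipschitz if $|f(\mathbf{x})-f(\mathbf{x}')|\le\rho\|\mathbf{x}-\mathbf{x}'\|_1$. *)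

(* Defs.v *)
From HB Require Import structures.
From mathcomp Require Import all_boot all_order all_algebra.
Set Implicit Arguments. Unset Strict Implicit. Unset Printing Implicit Defensive.
Import Order.TTheory GRing.Theory Num.Theory.
Local Open Scope ring_scope.

Section Construction.
Variable R : realFieldType.

Definition relu (z : R) : R := Num.max z 0.

(* points of R^d, indexed by 'I_d (coordinate r : 'I_d is the paper's r+1) *)
Definition point (d : nat) := 'I_d -> R.

(* r-th base-(t+1) digit of i (0-indexed r; the paper's pi^i_{r+1}),
   most significant digit first:  i = sum_r pi^i_r (t+1)^(d-1-r) *)
Definition digit (d t i : nat) (r : 'I_d) : nat :=
  (i %/ (t.+1 ^ (d.-1 - r)%N)) %% t.+1.

Definition gridpt (d t i : nat) : point d :=
  fun r => (digit t i r)%:R / t%:R.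

(* hat g_j(x) with coefficient a_j and b_{r,j} = pi^j_r / t *)
Definition ghat (d t : nat) (M : R) (aj : R) (j : nat) (x : point d) : R :=
  aj * relu (\sum_(r < d) (- M * relu (- x r + gridpt t j r)) + 1 / t%:R).

(* coefs f n = [:: a_1; ...; a_n] *)
Fixpoint coefs (d t : nat) (M : R) (f : point d -> R) (n : nat) : seq R :=
  match n with
  | 0 => [::]
  | n'.+1 =>
      let s := @coefs d t M f n' in
      let i := n'.+1 in
      let yhat := f (fun _ => 0) +
                  \sum_(j < n') @ghat d t M (nth 0 s j) j.+1 (@gridpt d t i) in
      rcons s (t%:R * (f (@gridpt d t i) - yhat))
  end.

(* a_i for 1 <= i *)
Definition coef (d t : nat) (M : R) (f : point d -> R) (i : nat) : R :=
  nth 0 (coefs t M f i) i.-1.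

Definition in_cube (d : nat) (x : point d) : Prop :=
  forall r, 0 <= x r <= 1.

Definition lipschitz1 (d : nat) (rho : R) (f : point d -> R) : Prop :=
  forall x y, in_cube x -> in_cube y ->
    `|f x - f y| <= rho * \sum_(r < d) `|x r - y r|.

End Construction.

(* Main.v *)
Require Import Defs.
From HB Require Import structures.
From mathcomp Require Import all_boot all_order all_algebra.
From mathcomp Require Import zify ring lra.
Import Order.TTheory GRing.Theory Num.Theory.
Local Open Scope ring_scope.

Lemma recon (b d m : nat) : (0 < b)%N -> (m < b ^ d)%N ->
  m = (\sum_(k < d) ((m %/ b ^ k) %% b) * b ^ k)%N.
Proof.
move=> b0; elim: d m => [|d IH] m hm.
  by rewrite big_ord0; move: hm; rewrite expn0; case: m.
rewrite big_ord_recl /= expn0 divn1 muln1.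
have hm' : (m %/ b < b ^ d)%N by rewrite ltn_divLR // mulnC -expnS.
under eq_bigr => k _ do rewrite /bump /= add1n expnS divnMA mulnCA.
rewrite -big_distrr /= -IH //.
by rewrite addnC mulnC -divn_eq.
Qed.

Lemma digit_sum (d t m : nat) : (m < t.+1 ^ d)%N ->
  m = (\sum_(r < d) digit t m r * t.+1 ^ (d.-1 - r))%N.
Proof.
move=> hm; rewrite {1}(@recon t.+1 d m) //.
rewrite (reindex_inj rev_ord_inj) /=; apply: eq_bigr => r _.
rewrite /digit.
have -> : (d - r.+1 = d.-1 - r)%N by case: r => r /= hr; lia.
by [].
Qed.

Lemma digit_lt (d t m : nat) (r : 'I_d) : (digit t m r < t.+1)%N.
Proof. by rewrite /digit ltn_mod. Qed.

Lemma le_leq (d t m i : nat) : (m < t.+1 ^ d)%N -> (i < t.+1 ^ d)%N ->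
  (forall r : 'I_d, digit t m r <= digit t i r)%N -> (m <= i)%N.
Proof.
move=> hm hi h; rewrite (digit_sum _ _ _ hm) (digit_sum _ _ _ hi).
by apply: leq_sum => r _; rewrite leq_mul2r h orbT.
Qed.

Lemma dig_inj (d t m i : nat) : (m < t.+1 ^ d)%N -> (i < t.+1 ^ d)%N ->
  (forall r : 'I_d, digit t m r = digit t i r) -> m = i.
Proof.
move=> hm hi h; rewrite (digit_sum _ _ _ hm) (digit_sum _ _ _ hi).
by apply: eq_bigr => r _; rewrite h.
Qed.

Lemma dig_surj (d t : nat) (v : 'I_d -> nat) : (forall r, v r <= t)%N ->
  exists2 m, (m < t.+1 ^ d)%N & forall r, digit t m r = v r.
Proof.
move=> hv.
pose phi (m : 'I_(t.+1 ^ d)) : {ffun 'I_d -> 'I_t.+1} :=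
  [ffun r => Ordinal (@digit_lt d t m r)].
have injphi : injective phi.
  move=> m1 m2 /ffunP h; apply: val_inj; apply: (@dig_inj d t) => // [||r]; rewrite ?ltn_ord //.
  by have := h r; rewrite !ffunE => /(congr1 val).
have hc : (#|{ffun 'I_d -> 'I_t.+1}| <= #|'I_(t.+1 ^ d)|)%N.
  by rewrite card_ffun !card_ord.
pose w : {ffun 'I_d -> 'I_t.+1} := [ffun r => Ordinal (hv r : (v r < t.+1)%N)].
have /codomP [m hm] := inj_card_onto injphi hc w.
exists (val m) => [|r]; first exact: ltn_ord.
by have := congr1 (fun g : {ffun _ -> _} => val (g r)) hm; rewrite /w /phi !ffunE /= => ->.
Qed.

Section S.
Variables (R : realFieldType) (d t : nat) (M : R) (f : point R d -> R).
Hypothesis ht : (1 <= t)%N.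
Hypothesis hM : 1 <= M.

Lemma tpos : 0 < t%:R :> R.
Proof. by rewrite ltr0n. Qed.

Lemma relu_id (z : R) : 0 <= z -> relu z = z.
Proof. by move=> h; rewrite /relu max_l. Qed.

Lemma relu_0 (z : R) : z <= 0 -> relu z = 0.
Proof. by move=> h; rewrite /relu max_r. Qed.

Lemma relu_ge (z : R) : z <= relu z.
Proof. by rewrite /relu le_max lexx. Qed.

Lemma relu_ge0 (z : R) : 0 <= relu z.
Proof. by rewrite /relu le_max lexx orbT. Qed.

Lemma ghat_eval (a : R) (j i : nat) :
  ghat t M a j (gridpt R t i : point R d) =
  if [forall r : 'I_d, (digit t j r <= digit t i r)%N] then a / t%:R else 0.
Proof.
have tp := tpos.
rewrite /ghat; case: forallP => h.
  rewrite big1 ?add0r.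
    rewrite relu_id; last by rewrite mul1r invr_ge0 ltW.
    by rewrite mulrA mulr1.
  move=> r _; rewrite /gridpt relu_0 ?mulr0 //.
  rewrite addrC subr_le0 ler_pM2r ?invr_gt0 // ler_nat; exact: h.
have [r hr] : exists r : 'I_d, (digit t i r < digit t j r)%N.
  apply/existsP; apply: contraT; rewrite negb_exists => /forallP hh; exfalso.
  by apply: h => r; have := hh r; rewrite -leqNgt.
rewrite relu_0 ?mulr0 //.
rewrite (bigD1 r) //= -addrA.
have h1 : \sum_(k < d | k != r) - M * relu (- gridpt R t i k + gridpt R t j k) <= 0.
  apply: sumr_le0 => k _; rewrite mulNr oppr_le0 mulr_ge0 ?relu_ge0 //.
  by apply: le_trans hM.
have h2 : 1 / t%:R <= relu (- gridpt R t i r + gridpt R t j r).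
  apply: le_trans (relu_ge _).
  rewrite /gridpt addrC -mulrBl ler_pM2r ?invr_gt0 // -natrB ?ler1n ?subn_gt0 //.
  exact: ltnW.
have h3 : 0 <= relu (- gridpt R t i r + gridpt R t j r) := relu_ge0 _.
have h4 : 0 <= 1 / t%:R :> R by rewrite divr_ge0 // ltW.
have h5 : 0 <= (M - 1) * relu (- gridpt R t i r + gridpt R t j r) by rewrite mulr_ge0 // subr_ge0.
move: h1 h2 h3 h4 h5; set s := \sum_(_ < _ | _) _; set hh := relu _; set u := 1 / _.
move=> *; nra.
Qed.

Lemma coefs_size n : size (coefs t M f n) = n.
Proof. by elim: n => //= n IH; rewrite size_rcons IH. Qed.

Lemma coefs_nth n j : (j < n)%N -> nth 0 (coefs t M f n) j = coef t M f j.+1.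
Proof.
elim: n => // n IH hj; rewrite /= nth_rcons coefs_size.
case: ltnP => hjn; first by rewrite IH.
have -> : j = n by lia.
by rewrite eqxx /coef /= nth_rcons coefs_size ltnn eqxx.
Qed.

Lemma coef_rec n : coef t M f n.+1 =
  t%:R * (f (gridpt R t n.+1) - (f (fun _ => 0) +
     \sum_(j < n) if [forall r : 'I_d, (digit t j.+1 r <= digit t n.+1 r)%N]
                  then coef t M f j.+1 / t%:R else 0)).
Proof.
rewrite {1}/coef /= nth_rcons coefs_size ltnn eqxx.
congr (_ * (_ - (_ + _))); apply: eq_bigr => j _.
by rewrite ghat_eval coefs_nth.
Qed.

End S.

Section S.
Variables (R : realFieldType) (d t : nat) (M rho : R) (f : point R d -> R).
Hypothesis ht : (1 <= t)%N.
Hypothesis hM : 1 <= M.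
Hypothesis hL : lipschitz1 rho f.
Hypothesis hrho : 0 < rho.

Let N := (t.+1 ^ d)%N.
Let F (m : nat) := f (gridpt R t m).
Let c (m : nat) := if m == 0%N then F 0 else coef t M f m / t%:R.
Let le (m i : nat) := [forall r : 'I_d, (digit t m r <= digit t i r)%N].

Lemma cube_grid m : in_cube (gridpt R t m : point R d).
Proof.
have tp : 0 < t%:R :> R by rewrite ltr0n.
move=> r; rewrite /gridpt divr_ge0 ?ler0n ?(ltW tp) //=.
by rewrite ler_pdivrMr // mul1r ler_nat -ltnS digit_lt.
Qed.

Lemma f_ext (x y : point R d) : in_cube x -> in_cube y ->
  (forall r, x r = y r) -> f x = f y.
Proof.
move=> hx hy h; apply/eqP; rewrite -subr_eq0 -normr_le0.
apply: le_trans (hL _ _ hx hy) _.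
by rewrite big1 ?mulr0 // => r _; rewrite h subrr normr0.
Qed.

Lemma digit0 (r : 'I_d) : digit t 0 r = 0%N :> nat.
Proof. by rewrite /digit div0n mod0n. Qed.

Lemma f0 : f (fun _ => 0) = F 0.
Proof.
apply: f_ext; first by move=> r; rewrite lexx ler01.
  exact: cube_grid.
by move=> r; rewrite /gridpt digit0 mul0r.
Qed.

Lemma sum_id i : (i < N)%N -> \sum_(m < N | le m i) c m = F i.
Proof.
move=> hi.
rewrite -(big_mkord (fun m => le m i) c).
rewrite (@big_cat_nat _ _ _ i.+1) //=.
rewrite [X in _ + X]big_nat_cond [X in _ + X]big1 ?addr0; last first.
  move=> m /andP[/andP[hm1 hm2] hle]; exfalso.
  have : (m <= i)%N.
    apply: (@le_leq d t) => //; exact/forallP.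
  by rewrite leqNgt hm1.
rewrite big_mkcond big_nat_recr //=.
have -> : le i i by apply/forallP => r.
case: i hi => [|n] hi.
  by rewrite big_geq // add0r /c.
rewrite big_ltn // big_add1 /= big_mkord.
have -> : le 0 n.+1 by apply/forallP => r; rewrite digit0.
rewrite /c /= coef_rec // f0.
have tp : t%:R != 0 :> R by rewrite pnatr_eq0 -lt0n.
have E : \sum_(j < n) (if le j.+1 n.+1 then coef t M f j.+1 / t%:R else 0) = \sum_(j < n) (if [forall r : 'I_d, (digit t j.+1 r <= digit t n.+1 r)%N] then coef t M f j.+1 / t%:R else 0) by [].
rewrite E.
by rewrite /F; field.
Qed.


Lemma prod_bool (I : finType) (P : I -> bool) :
  \prod_(r : I) ((P r)%:R : R) = ([forall r, P r])%:R.
Proof.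
case: forallP => h; first by apply: big1 => r _; rewrite h.
have [r hr] : exists r, ~~ P r.
  apply/existsP; apply: contraT; rewrite negb_exists => /forallP hh; exfalso.
  by apply: h => r; have := hh r; rewrite negbK.
by rewrite (bigD1 r) //= (negbTE hr) mul0r.
Qed.

Definition cond (g : {ffun 'I_d -> bool}) (i m : nat) :=
  [forall r : 'I_d, if g r then (digit t m r < digit t i r)%N
                    else (digit t m r <= digit t i r)%N].
Definition sgn (g : {ffun 'I_d -> bool}) : R :=
  \prod_(r < d) (if g r then -1 else 1).
Definition Q (i : nat) (g : {ffun 'I_d -> bool}) :=
  \sum_(m < N | cond g i m) c m.

Lemma mobius i : (i < N)%N -> c i = \sum_(g : {ffun 'I_d -> bool}) sgn g * Q i g.
Proof.
move=> hi.
have -> : c i = \sum_(m < N) c m * ((val m == i)%:R).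
  rewrite (bigD1 (Ordinal hi)) //= eqxx mulr1 big1 ?addr0 // => m hm.
  case: eqP => e; last by rewrite mulr0.
  by exfalso; move/eqP: hm; apply; apply: val_inj.
have E : forall m : 'I_N, (val m == i)%:R = \sum_(g : {ffun 'I_d -> bool}) sgn g * (cond g i m)%:R :> R.
  move=> m.
  have -> : (val m == i) = [forall r : 'I_d, digit t m r == digit t i r].
    apply/eqP/forallP => [-> //|h]; apply: (@dig_inj d t) => //; [exact: ltn_ord | move=> r; exact/eqP].
  rewrite -prod_bool.
  have -> : \prod_(r < d) ((digit t m r == digit t i r)%:R : R) =
     \prod_(r < d) \sum_(b : bool) (if b then - ((digit t m r < digit t i r)%N%:R) else ((digit t m r <= digit t i r)%N%:R) : R).
    apply: eq_bigr => r _; rewrite big_bool /=.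
    by case: ltngtP => _ /=; rewrite ?mulr1n ?mulr0n ?oppr0 ?addNr ?add0r ?addr0.
  rewrite bigA_distr_bigA /=; apply: eq_bigr => g _.
  rewrite /sgn /cond -prod_bool -big_split /=; apply: eq_bigr => r _.
  by case: (g r); rewrite ?mulN1r ?mul1r.
under eq_bigr => m _ do rewrite E big_distrr /=.
rewrite exchange_big /=; apply: eq_bigr => g _.
rewrite /Q [in RHS]big_mkcond [in RHS]big_distrr /=; apply: eq_bigr => m _.
by case: (cond g i m); rewrite /= ?mulr1 ?mulr0 ?mul0r // mulrC.
Qed.

Lemma Q_val i (g : {ffun 'I_d -> bool}) m' : (m' < N)%N -> (forall r : 'I_d, g r -> 0 < digit t i r)%N ->
  (forall r : 'I_d, digit t m' r = digit t i r - g r)%N -> Q i g = F m'.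
Proof.
move=> hm hg hd; rewrite /Q -(sum_id _ hm); apply: eq_bigl => m.
apply: eq_forallb => r; rewrite hd.
by case E: (g r) => /=; [have := hg r E; lia | rewrite subn0].
Qed.

Lemma Q_zero i (g : {ffun 'I_d -> bool}) (r : 'I_d) : g r -> digit t i r = 0%N -> Q i g = 0.
Proof.
move=> hg hd; rewrite /Q big_pred0 // => m; apply/forallP => /(_ r).
by rewrite hg hd ltn0.
Qed.

Definition toggle (r0 : 'I_d) (g : {ffun 'I_d -> bool}) : {ffun 'I_d -> bool} :=
  [ffun r => if r == r0 then ~~ g r0 else g r].

Lemma toggleK r0 : involutive (toggle r0).
Proof.
move=> g; apply/ffunP => r; rewrite !ffunE eqxx negbK.
by case: eqP => // ->.
Qed.

Lemma sgn_toggle r0 (g : {ffun 'I_d -> bool}) : sgn (toggle r0 g) = - sgn g.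
Proof.
rewrite /sgn (bigD1 r0) //= [in RHS](bigD1 r0) //= ffunE eqxx.
rewrite (eq_bigr (fun r => if g r then -1 else 1)); last first.
  by move=> r /negbTE hr; rewrite ffunE hr.
by case: (g r0) => /=; rewrite ?mulN1r ?mul1r ?opprK.
Qed.

Lemma sum_toggle r0 (h : {ffun 'I_d -> bool} -> R) :
  \sum_(g : {ffun 'I_d -> bool} | g r0) h g = \sum_(g : {ffun 'I_d -> bool} | ~~ g r0) h (toggle r0 g).
Proof.
rewrite (reindex_inj (can_inj (toggleK r0))); apply: eq_bigl => g.
by rewrite ffunE eqxx.
Qed.

Lemma grid_dist m1 m2 (r0 : 'I_d) : (digit t m1 r0 = (digit t m2 r0).+1)%N ->
  (forall r, r != r0 -> digit t m1 r = digit t m2 r) ->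
  \sum_(r < d) `|gridpt R t m1 r - gridpt R t m2 r| = 1 / t%:R.
Proof.
move=> h0 hr; rewrite (bigD1 r0) //= big1 ?addr0.
  rewrite /gridpt h0 -mulrBl -natrB // subSnn normrM normr1 !mul1r.
  by rewrite ger0_norm // invr_ge0 ler0n.
by move=> r /hr hh; rewrite /gridpt hh subrr normr0.
Qed.

Lemma Q_diff i (g : {ffun 'I_d -> bool}) (r0 : 'I_d) : (i < N)%N -> ~~ g r0 -> (0 < digit t i r0)%N ->
  `|Q i g - Q i (toggle r0 g)| <= rho / t%:R.
Proof.
move=> hi hg0 hr0.
have rho0 : 0 <= rho := ltW hrho.
case: (boolP [forall r, g r ==> (0 < digit t i r)%N]) => hall.
  have hg : forall r, g r -> (0 < digit t i r)%N by move=> r; move/forallP: hall => /(_ r) /implyP.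
  have hg' : forall r, toggle r0 g r -> (0 < digit t i r)%N.
    by move=> r; rewrite ffunE; case: eqP => [-> //|_]; apply: hg.
  have [m1 hm1 hd1] := @dig_surj d t (fun r => digit t i r - g r)%N
     (fun r => leq_trans (leq_subr _ _) (ltnSE (digit_lt _ _ _ _))).
  have [m2 hm2 hd2] := @dig_surj d t (fun r => digit t i r - toggle r0 g r)%N
     (fun r => leq_trans (leq_subr _ _) (ltnSE (digit_lt _ _ _ _))).
  rewrite (Q_val _ _ _ hm1 hg hd1) (Q_val _ _ _ hm2 hg' hd2).
  apply: le_trans (hL _ _ (cube_grid m1) (cube_grid m2)) _.
  rewrite (@grid_dist m1 m2 r0) ?mul1r //.
    rewrite hd1 hd2 ffunE eqxx (negbTE hg0) /= subn0; lia.
  by move=> r hr; rewrite hd1 hd2 ffunE (negbTE hr).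
have [r hr] : exists r, g r && (digit t i r == 0%N).
  apply/existsP; move: hall; apply: contraNT; rewrite negb_exists => /forallP hh.
  apply/forallP => r; have := hh r; by case: (g r) => //=; rewrite lt0n.
have hrr0 : r != r0 by apply/eqP => e; move: hr; rewrite e (negbTE hg0).
case/andP: hr => hgr /eqP hdr.
rewrite (Q_zero _ _ _ hgr hdr) (@Q_zero i (toggle r0 g) r) ?subrr ?normr0.
- by rewrite divr_ge0 ?ler0n.
- by rewrite ffunE (negbTE hrr0).
- exact: hdr.
Qed.

Lemma c_bound i (r0 : 'I_d) : (i < N)%N -> (0 < digit t i r0)%N ->
  `|c i| <= 2 ^+ d.-1 * (rho / t%:R).
Proof.
move=> hi hr0.
set K := rho / t%:R.
have K0 : 0 <= K by rewrite divr_ge0 ?ler0n ?ltW.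
have S2 : \sum_(g : {ffun 'I_d -> bool} | ~~ g r0) K + \sum_(g : {ffun 'I_d -> bool} | ~~ g r0) K = 2 ^+ d * K.
  transitivity (\sum_(g : {ffun 'I_d -> bool}) K).
    by rewrite [RHS](bigID (fun g : {ffun 'I_d -> bool} => g r0)) /= (sum_toggle r0 (fun _ => K)).
  by rewrite sumr_const card_ffun card_bool card_ord -[in LHS]mulr_natl natrX.
have hd : d = d.-1.+1 by rewrite prednK // (leq_ltn_trans (leq0n r0) (ltn_ord r0)).
have e2 : 2 ^+ d = 2 * 2 ^+ d.-1 :> R by rewrite -exprS -hd.
have S1 : \sum_(g : {ffun 'I_d -> bool} | ~~ g r0) K = 2 ^+ d.-1 * K.
  move: S2; rewrite e2 -mulrA; set S := \sum_(_ | _) _; set X := _ * K.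
  by move=> *; lra.
rewrite -S1 mobius // (bigID (fun g : {ffun 'I_d -> bool} => g r0)) /= sum_toggle -big_split /=.
apply: le_trans (ler_norm_sum _ _ _) _; apply: ler_sum => g hg.
rewrite sgn_toggle mulNr addrC -mulrBr normrM.
have -> : `|sgn g| = 1.
  by rewrite /sgn normr_prod big1 // => r _; case: (g r); rewrite ?normrN1 ?normr1.
by rewrite mul1r Q_diff.
Qed.

Lemma main i : (1 <= i)%N -> (i < N)%N ->
  `|coef t M f i| <= 2 ^+ d.-1 * d%:R * rho.
Proof.
move=> hi1 hi.
have [r0 hr0] : exists r0 : 'I_d, (0 < digit t i r0)%N.
  apply/existsP; apply: contraT; rewrite negb_exists => /forallP hh; exfalso.
  have : i = 0%N.
    apply: (@dig_inj d t) => //; first by rewrite expn_gt0.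
    by move=> r; rewrite digit0; have := hh r; rewrite lt0n negbK => /eqP.
  by move=> e; rewrite e in hi1.
have tp : 0 < t%:R :> R by rewrite ltr0n.
have -> : coef t M f i = t%:R * c i.
  rewrite /c; case: eqP => [e|_]; first by rewrite e in hi1.
  by field; rewrite gt_eqF.
rewrite normrM (ger0_norm (ltW tp)).
apply: le_trans (ler_wpM2l (ltW tp) (c_bound _ _ hi hr0)) _.
have d1 : 1 <= d%:R :> R by rewrite ler1n (leq_ltn_trans (leq0n r0) (ltn_ord r0)).
have p0 : 0 <= 2 ^+ d.-1 :> R by rewrite exprn_ge0.
have -> : t%:R * (2 ^+ d.-1 * (rho / t%:R)) = 2 ^+ d.-1 * rho :> R.
  by field; rewrite gt_eqF.
have r0' : 0 <= rho by apply: ltW.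
rewrite -mulrA ler_wpM2l // ler_peMl //.
Qed.

End S.

Theorem lemmaA6 (R : realFieldType) (d t : nat) (M rho : R)
  (f : point R d -> R) :
  (1 <= d)%N -> (1 <= t)%N -> 1 <= M -> 0 < rho ->
  lipschitz1 rho f ->
  forall i : nat, (1 <= i)%N -> (i <= t.+1 ^ d - 1)%N ->
    `|coef t M f i| <= 2 ^+ d.-1 * d%:R * rho.
Proof.
move=> hd ht hM hrho hL i hi1 hi2.

apply: (main _ _ _ _ _ _ ht hM hL hrho _ hi1).
have : (0 < t.+1 ^ d)%N by rewrite expn_gt0.
lia.
Qed.
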